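(* Let $(\mathcal{M},\mathrm{dist})$ be a metric space, $\mathcal{F}\subset2^{\mathcal{M}}$, and $J:\mathcal{M}\to\mathbb{R}\cup\{+\infty\}$ lower semi-continuous with $c=\inf_{A\in\mathcal{F}}\sup_{x\in A}J(x)\in\mathbb{R}$. Assume (F2): there is $c'>c$ such that for every sequence $(A_n)\subset\mathcal{F}$ with $A_n\subset\{x\in\mathcal{M}:J(x)\le c'\}$ for all $n$, $\limsup_nA_n\in\mathcal{F}$. Then there exists $\bar A\in\mathcal{F}$ with $\sup_{\bar A}J=c$.
   Context: For sets $A_n\subset\mathcal{M}$, $\limsup_nA_n$ is the set of $x\in\mathcal{M}$ such that for some $n_j\to\infty$ there are $x_{n_j}\in A_{n_j}$ with $x_{n_j}\to x$. *)

(* Defs.v *)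
From HB Require Import structures.
From mathcomp Require Import all_boot all_order all_algebra.
From mathcomp Require Import all_classical all_reals ereal.
Set Implicit Arguments. Unset Strict Implicit. Unset Printing Implicit Defensive.
Import Order.TTheory GRing.Theory Num.Theory.
Local Open Scope classical_set_scope.
Local Open Scope ring_scope.

Definition is_metric (R : realType) (M : Type) (d : M -> M -> R) : Prop :=
  [/\ (forall x y, 0 <= d x y),
      (forall x y, d x y = 0 <-> x = y),
      (forall x y, d x y = d y x) &
      (forall x y z, d x z <= d x y + d y z)].

Definition mconverges (R : realType) (M : Type) (d : M -> M -> R)
    (u : nat -> M) (x : M) : Prop :=
  forall e : R, 0 < e -> exists N : nat, forall n, (N <= n)%N -> d (u n) x < e.

(* limsup_n A_n : the x such that for some n_j -> oo there are
   x_{n_j} in A_{n_j} with x_{n_j} -> x. *)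
Definition limsup_sets (R : realType) (M : Type) (d : M -> M -> R)
    (A : nat -> set M) : set M :=
  [set x | exists (nj : nat -> nat) (u : nat -> M),
      (forall N : nat, exists j0 : nat, forall j, (j0 <= j)%N -> (N <= nj j)%N) /\
      (forall j, A (nj j) (u j)) /\ mconverges d u x].

Definition lsc (R : realType) (M : Type) (d : M -> M -> R) (J : M -> \bar R) : Prop :=
  forall (x : M) (t : R), (t%:E < J x)%E ->
    exists delta : R, 0 < delta /\ forall y, d x y < delta -> (t%:E < J y)%E.

(* Main.v *)
Require Import Defs.
From HB Require Import structures.
From mathcomp Require Import all_boot all_order all_algebra.
From mathcomp Require Import all_classical all_reals ereal.
Import Order.TTheory GRing.Theory Num.Theory.
Local Open Scope classical_set_scope.
Local Open Scope ring_scope.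

Theorem proposition2p1 (R : realType) (M : Type) (d : M -> M -> R)
  (F : set (set M)) (J : M -> \bar R) (c : R) :
  is_metric d ->
  (forall x, J x <> -oo%E) ->
  lsc d J ->
  ereal_inf [set ereal_sup (J @` A) | A in F] = c%:E ->
  (exists c' : R, c < c' /\
     forall A : nat -> set M, (forall n, F (A n)) ->
       (forall n, A n `<=` [set x | (J x <= c'%:E)%E]) ->
       F (limsup_sets d A)) ->
  exists Abar : set M, F Abar /\ ereal_sup (J @` Abar) = c%:E.
Proof.
move=> [_ _ dsym _] _ Jlsc Hinf [c' [cc' HF]].
pose eps (n : nat) : R := (c' - c) / (n.+1)%:R.
have eps_gt0 n : 0 < eps n by rewrite divr_gt0 // subr_gt0.
have eps_le n : eps n <= c' - c.
  rewrite ler_pdivrMr // -{1}(mulr1 (c' - c)); apply: ler_wpM2l; [by rewrite subr_ge0 ltW | by rewrite ler1n].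
have ex n : exists A, F A /\ (ereal_sup (J @` A) < (c + eps n)%:E)%E.
  have : (ereal_inf [set ereal_sup (J @` A) | A in F] < (c + eps n)%:E)%E.
    by rewrite Hinf lte_fin ltrDl.
  by move=> /ereal_inf_lt [y [A FA <-] Hy]; exists A.
have [A HA] := choice ex.
have sub n : A n `<=` [set x | (J x <= c'%:E)%E].
  move=> x Ax /=; apply: (@le_trans _ _ (ereal_sup (J @` A n))).
    by apply: ereal_sup_ubound; exists x.
  apply: (le_trans (ltW (HA n).2)).
  by rewrite lee_fin -lerBrDl.
have FL := HF A (fun n => (HA n).1) sub.
exists (limsup_sets d A); split => //.
apply/eqP; rewrite eq_le; apply/andP; split; last first.
  by rewrite -Hinf; apply: ereal_inf_lbound; exists (limsup_sets d A).
apply: ub_ereal_sup => _ [x [nj [u [Hnj [Hu Hcv]]]] <-].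
rewrite leNgt; apply/negP => cJ.
have [t [ct tJ]] : exists t : R, c < t /\ (t%:E < J x)%E.
  move: cJ; case: (J x) => [r||] //.
  - rewrite lte_fin => cr; exists ((c + r) / 2).
    by rewrite lte_fin !midf_lt.
  - by move=> _; exists (c + 1); rewrite ltrDl ltr01 ltry.
have [del [del0 Hdel]] := Jlsc x t tJ.
pose s := t - c.
have s0 : 0 < s by rewrite subr_gt0.
pose N := Num.trunc ((c' - c) / s).
have epsN n : (N <= n)%N -> eps n < s.
  move=> Nn; rewrite /eps ltr_pdivrMr // -ltr_pdivrMl // mulrC.
  apply: lt_le_trans (truncnS_gt _) _; rewrite ler_nat; exact: Nn.
have [j0 Hj0] := Hnj N.
have [N2 HN2] := Hcv del del0.
pose j := maxn j0 N2.
have h1 := Hj0 j (leq_maxl _ _).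
have h2 := HN2 j (leq_maxr _ _).
have := Hdel (u j); rewrite dsym => /(_ h2) Hlt.
have : (J (u j) < (c + eps (nj j))%:E)%E.
  apply: le_lt_trans (HA (nj j)).2; apply: ereal_sup_ubound; exists (u j) => //.
move=> Hle; have : ((c + eps (nj j))%:E < t%:E)%E.
  by rewrite lte_fin -ltrBrDl; exact: epsN.
move=> H3; have := lt_trans Hlt (lt_trans Hle H3); by rewrite ltxx.
Qed.
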